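(* Let $\mathcal G=(G,f,h)$ be a network dynamical system of size $N$ with maximum out-degree $\Delta(G)$, satisfying Assumptions 1 and 2. Let $P$ be an integer with $2\Delta(G)+1<P<N$, and for each $q\in[N]$ let $\phi_q\in\mathbb R^{P\times N}$ be a full-spark matrix. For each $q\in[N]$ let $x^q(1)$ be the state at time $1$ of the trajectory started from a $q$-pinching initial condition, and let $y^q(1)=\phi_q x^q(1)$. Then for every $q\in[N]$ the optimization problem $$\min_{\tilde x\in\mathbb R^N}\|\tilde x\|_0\quad\text{subject to}\quad \phi_q\tilde x=y^q(1)$$ has a unique solution $x^q_*(1)$, and $x^q_*(1)=x^q(1)$. Moreover, $\operatorname{supp}(x^q(1))\setminus\{q\}=L_1(q)$ for every $q\in[N]$; consequently the adjacency matrix $A$ is uniquely determined by $\{(\phi_q,y^q(1))\}_{q=1}^N$ via $A_{ij}=1$ iff $i\neq j$ and $i\in\operatorname{supp}(x^j_*(1))$.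
   Context: Let $G$ be a directed graph on vertex set $[N]=\{1,\dots,N\}$ without self-loops, with adjacency matrix $A\in\{0,1\}^{N\times N}$, where $A_{ij}=1$ if and only if $i$ receives an edge (input) from $j$; in particular $A_{ii}=0$. The out-degree of $q\in[N]$ is $d_q=\#\{i: A_{iq}=1\}$, the maximum out-degree is $\Delta(G)=\max_{q}d_q$, and the first-level set of $q$ is $L_1(q)=\{i\in[N]: A_{iq}=1\}$. The network dynamical system $\mathcal G=(G,f,h)$ is the discrete-time system $x_i(t+1)=f_i(x_i(t))+\sum_{j=1}^N A_{ij}h_{ij}(x_i(t),x_j(t))$ for $i\in[N]$, $t=0,1,2,\dots$, where $f_i:\mathbb R\to\mathbb R$ and $h_{ij}:\mathbb R\times\mathbb R\to\mathbb R$; the state vector is $x(t)=(x_1(t),\dots,x_N(t))^T$. Assumption 1: $f_i(0)=0$ for all $i\in[N]$. Assumption 2: there is $\delta>0$ such that for all $i,j\in[N]$, $h_{ij}(0,0)=0$ and $h_{ij}(0,v)\neq 0$ for every $v$ with $0<|v|<\delta$. For $q\in[N]$, a $q$-pinching initial condition is $x^q(0)$ with $x^q_i(0)=\epsilon_q\delta_{iq}$ (Kronecker delta), where $0<|\epsilon_q|<\delta$; $x^q(t)$ denotes the resulting trajectory. For $x\in\mathbb R^N$, $\operatorname{supp}(x)=\{i: x_i\neq0\}$ and $\|x\|_0=\#\operatorname{supp}(x)$. The spark of $\phi\in\mathbb R^{P\times N}$ ($P<N$) is $\min\{\|x\|_0: \phi x=0,\ x\neq 0\}$; $\phi$ is full-spark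 if its spark equals $P+1$. *)

(* Defs.v *)
From HB Require Import structures.
From mathcomp Require Import all_boot all_order all_algebra.
From mathcomp Require Import reals.
Set Implicit Arguments. Unset Strict Implicit. Unset Printing Implicit Defensive.
Import Order.TTheory GRing.Theory Num.Theory.
Local Open Scope ring_scope.

(* Graph on [N] = 'I_N: A i j = true iff i receives an edge from j. *)

Definition out_degree (N : nat) (A : 'I_N -> 'I_N -> bool) (q : 'I_N) : nat :=
  #|[set i | A i q]|.

Definition max_out_degree (N : nat) (A : 'I_N -> 'I_N -> bool) : nat :=
  (\max_(q < N) out_degree A q)%N.

Definition L1 (N : nat) (A : 'I_N -> 'I_N -> bool) (q : 'I_N) : {set 'I_N} :=
  [set i | A i q].

Definition nds_step (R : realType) (N : nat) (A : 'I_N -> 'I_N -> bool)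
  (f : 'I_N -> R -> R) (h : 'I_N -> 'I_N -> R -> R -> R) (x : 'cV[R]_N) : 'cV[R]_N :=
  \col_i (f i (x i 0) + \sum_(j < N) (A i j)%:R * h i j (x i 0) (x j 0)).

Definition pinch (R : realType) (N : nat) (q : 'I_N) (eps : R) : 'cV[R]_N :=
  \col_i (eps * (i == q)%:R).

Definition supp (R : realType) (N : nat) (x : 'cV[R]_N) : {set 'I_N} :=
  [set i | x i 0 != 0].
Definition l0 (R : realType) (N : nat) (x : 'cV[R]_N) : nat := #|supp x|.

(* spark(phi) = P + 1, i.e. min { ||x||_0 : phi x = 0, x <> 0 } = P + 1 *)
Definition full_spark (R : realType) (P N : nat) (phi : 'M[R]_(P, N)) : Prop :=
  (forall x : 'cV[R]_N, phi *m x = 0 -> x != 0 -> (P.+1 <= l0 x)%N) /\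
  (exists x : 'cV[R]_N, [/\ phi *m x = 0, x != 0 & l0 x = P.+1]).

Definition l0_minimizer (R : realType) (P N : nat) (phi : 'M[R]_(P, N))
  (y : 'cV[R]_P) (x : 'cV[R]_N) : Prop :=
  phi *m x = y /\ forall x' : 'cV[R]_N, phi *m x' = y -> (l0 x <= l0 x')%N.

(* Main.v *)
Require Import Defs.
From HB Require Import structures.
From mathcomp Require Import all_boot all_order all_algebra.
From mathcomp Require Import reals.
From mathcomp Require Import zify.
Import Order.TTheory GRing.Theory Num.Theory.
Local Open Scope ring_scope.

Lemma l0_sub (R : realType) (N : nat) (x y : 'cV[R]_N) :
  (l0 (x - y) <= l0 x + l0 y)%N.
Proof.
rewrite /l0; apply: leq_trans (leq_card_setU _ _).
apply: subset_leq_card; apply/subsetP => i; rewrite !inE !mxE => H.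
apply/orP; case: (boolP (x i 0 == 0)) => [/eqP hx|]; last by left.
right; apply: contra H => /eqP hy; by rewrite hx hy subrr.
Qed.

Lemma spark_uniq (R : realType) (P N : nat) (phi : 'M[R]_(P, N)) (x z : 'cV[R]_N) :
  full_spark phi -> phi *m x = phi *m z -> (l0 x + l0 z <= P)%N -> x = z.
Proof.
move=> [H _] e le; apply/eqP; rewrite -subr_eq0; apply/negPn/negP => nz.
have := H (x - z); rewrite mulmxBr e subrr => /(_ erefl nz) h.
have := leq_trans h (leq_trans (@l0_sub _ _ x z) le); by rewrite ltnn.
Qed.

Theorem mainTheorem1 (R : realType) (N : nat) (A : 'I_N -> 'I_N -> bool)
  (f : 'I_N -> R -> R) (h : 'I_N -> 'I_N -> R -> R -> R) (delta : R)
  (P : nat) (phi : 'I_N -> 'M[R]_(P, N)) (eps : 'I_N -> R) :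
  (forall i, A i i = false) ->
  (forall i, f i 0 = 0) ->
  0 < delta ->
  (forall i j, h i j 0 0 = 0 /\ (forall v, 0 < `|v| < delta -> h i j 0 v != 0)) ->
  ((max_out_degree A).*2.+1 < P < N)%N ->
  (forall q, full_spark (phi q)) ->
  (forall q, 0 < `|eps q| < delta) ->
  let x1 := fun q => nds_step A f h (pinch q (eps q)) in
  let y1 := fun q => phi q *m x1 q in
  [/\ (forall q, l0_minimizer (phi q) (y1 q) (x1 q) /\
                 forall x', l0_minimizer (phi q) (y1 q) x' -> x' = x1 q),
      (forall q, supp (x1 q) :\ q = L1 A q) &
      (forall xs : 'I_N -> 'cV[R]_N,
         (forall q, l0_minimizer (phi q) (y1 q) (xs q)) ->
         forall i j, A i j = (i != j) && (i \in supp (xs j)))].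
Proof.
move=> Airr f0 dpos hH /andP[hP _] spark epsH x1 y1.
have part2 : forall q, supp (x1 q) :\ q = L1 A q.
  move=> q; apply/setP => i; rewrite !inE /x1 /nds_step /pinch !mxE.
  case: (boolP (i == q)) => /= niq; first by rewrite (eqP niq) Airr.
  rewrite mulr0 f0 add0r (bigD1 q) //= big1 ?addr0; last first.
    move=> j njq; rewrite !mxE (negbTE njq) mulr0; by case: (hH i j) => -> _; rewrite mulr0.
  rewrite !mxE eqxx mulr1.
  case: (A i q); last by rewrite mul0r eqxx.
  rewrite mul1r; by case: (hH i q) => _ ->.
set D := max_out_degree A in hP.
have l0x1 : forall q, (l0 (x1 q) <= D.+1)%N.
  move=> q; rewrite /l0 (cardsD1 q) part2.
  have : (#|L1 A q| <= D)%N by rewrite /D /max_out_degree; exact: (@leq_bigmax _ (fun q => out_degree A q) q).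
  case: (q \in _) => /= hL; first by rewrite add1n ltnS.
  by rewrite add0n (leq_trans hL).
have uniq1 : forall q x', phi q *m x' = y1 q -> (l0 x' <= l0 (x1 q))%N -> x' = x1 q.
  move=> q x' e le; apply: (@spark_uniq _ _ _ _ _ _ (spark q) e).
  have h1 := l0x1 q; apply: (leq_trans _ hP).
  rewrite -addnn -addnS -addSn; apply: leq_add; last by [].
  exact: leq_trans le h1.
have part1 : forall q, l0_minimizer (phi q) (y1 q) (x1 q) /\
                 forall x', l0_minimizer (phi q) (y1 q) x' -> x' = x1 q.
  move=> q; split.
    split => // x' e; case: (leqP (l0 (x1 q)) (l0 x')) => // lt.
    have := uniq1 q x' e (ltnW lt) => ex; by rewrite ex ltnn in lt.
  by move=> x' [e m]; apply: uniq1 e (m _ erefl).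
split => // xs Hxs i j.
have -> : xs j = x1 j by case: (part1 j) => _; apply.
case: (boolP (i == j)) => [/eqP -> | nij] /=; first by rewrite Airr.
have := part2 j => /setP /(_ i); rewrite !inE nij /=; by move=> ->.
Qed.
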